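(* For every integer $k\ge 0$ there is a wall on $k$ colors whose graph has clique size $k$.
   Context: An interval graph $G=(V,E)$ comes with an interval representation $v\mapsto I_v$ (intervals of $\mathbb{R}$, distinct $u,v$ adjacent iff $I_u\cap I_v\ne\emptyset$); graphs are finite. $N[v]$ is the closed neighborhood of $v$ and $f(U)$ the image of $U$. A wall is a pair $(G,f)$ where $G$ is an interval graph on vertex set $V$ with a given interval representation, $f\colon V\to\{1,2,\dots\}$ is a proper coloring of $G$, and $f(N[v])\supseteq\{1,\dots,f(v)\}$ for every $v\in V$. It is a wall on $t$ colors if $|f(V)|=t$; its clique size is the clique number of $G$. *)

(* Defs.v *)
From Stdlib Require Import Reals.
From mathcomp Require Import all_boot.
Set Implicit Arguments. Unset Strict Implicit. Unset Printing Implicit Defensive.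

Definition is_interval (I : R -> Prop) : Prop :=
  (exists x, I x) /\
  (forall x y z : R, I x -> I z -> Rle x y -> Rle y z -> I y).

Definition iadj (V : finType) (I : V -> R -> Prop) (u v : V) : Prop :=
  u <> v /\ exists x, I u x /\ I v x.

Definition is_clique (V : finType) (I : V -> R -> Prop) (Q : {set V}) : Prop :=
  forall u v, u \in Q -> v \in Q -> u <> v -> iadj I u v.

Definition clique_number (V : finType) (I : V -> R -> Prop) (k : nat) : Prop :=
  (exists Q : {set V}, is_clique I Q /\ #|Q| = k) /\
  (forall Q : {set V}, is_clique I Q -> #|Q| <= k).

Definition ncolors (V : finType) (f : V -> nat) : nat :=
  size (undup [seq f v | v <- enum V]).

(* (G, f) is a wall, where G is the interval graph with representation I. *)
Definition is_wall (V : finType) (I : V -> R -> Prop) (f : V -> nat) : Prop :=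
  [/\ (forall v, is_interval (I v)),
      (forall v, 0 < f v),
      (forall u v, iadj I u v -> f u <> f v)
    & (forall v c, 1 <= c <= f v ->
         exists u, (u = v \/ iadj I u v) /\ f u = c)].

(* Main.v *)
Require Import Defs.
From Stdlib Require Import Reals.
From mathcomp Require Import all_boot.

Theorem mainTheorem4 :
  forall k : nat,
    exists (V : finType) (I : V -> R -> Prop) (f : V -> nat),
      is_wall I f /\ ncolors f = k /\ clique_number I k.
Proof.
move=> k.
exists ('I_k : finType), (fun _ _ => True), (fun i : 'I_k => (nat_of_ord i).+1).
have adjE : forall u v : 'I_k, iadj (fun _ _ => True) u v <-> u <> v.
  move=> u v; split; first by case.
  by move=> h; split=> //; exists R0.
split; [split|split].
- by move=> v; split; [exists R0|].
- by [].
- by move=> u v /adjE huv [] /val_inj.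
- move=> v c /andP[c1 cv].
  have hc : c.-1 < k by apply: leq_ltn_trans (ltn_ord v); rewrite -ltnS prednK.
  exists (Ordinal hc); split; last by rewrite /= prednK.
  case: (eqVneq (Ordinal hc) v) => [->|ne]; first by left.
  by right; apply/adjE => e; move: ne; rewrite e eqxx.
- rewrite /ncolors undup_id ?size_map -?enumT ?size_enum_ord //.
  rewrite (map_inj_uniq (f := fun v : 'I_k => (nat_of_ord v).+1)) ?enum_uniq //.
  by move=> x y [] /val_inj.
- split.
  + exists setT; split; last by rewrite cardsT card_ord.
    by move=> u v _ _ /adjE.
  + move=> Q _; apply: leq_trans (max_card _) _; by rewrite card_ord.
Qed.
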